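(* Let $p:V\to X$ be a smooth map between diffeological spaces, and suppose that each fibre of $p$ has a (real) vector space structure. Then there is a smallest diffeology $\mathcal{D}$ on $V$ which contains the given diffeology on $V$ and which makes $V$ (with $p$ and the given fibrewise vector space structures) into a diffeological vector space over $X$.
   Context: A diffeological space is a set with, for every open subset $U$ of every $\mathbb{R}^n$, a set of maps $U\to X$ called plots, containing constants, closed under precomposition with smooth maps between open subsets of Euclidean spaces, and satisfying the sheaf condition; smooth maps send plots to plots; diffeologies on a set are ordered by inclusion. A diffeological vector space over $X$ is a diffeological space $V$ with a smooth map $p:V\to X$ and a vector space structure on each fibre $p^{-1}(x)$ such that fibrewise addition $V\times_X V\to V$, scalar multiplication $\mathbb{R}\times V\to V$ and the zero section $X\to V$ are smooth, where $\mathbb{R}\times V$ has the product diffeology and $V\times_X V$ the sub-diffeology of $V\times V$. *)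

(* Defs.v *)
From HB Require Import structures.
From mathcomp Require Import all_boot all_order all_algebra.
From mathcomp Require Import all_classical all_reals all_analysis.
Set Implicit Arguments. Unset Strict Implicit. Unset Printing Implicit Defensive.
Import Order.TTheory GRing.Theory Num.Theory.
Import numFieldNormedType.Exports.
Local Open Scope classical_set_scope.
Local Open Scope ring_scope.

Section Diffeology.
Variable R : realType.

(** Smooth (C^oo) maps on an open subset U of R^n = 'rV[R]_n:
    every iterated directional derivative exists and is (Frechet)
    differentiable at every point of U. *)
Fixpoint iterD {n : nat} {W : normedModType R} (vs : seq 'rV[R]_n)
  (f : 'rV[R]_n -> W) : 'rV[R]_n -> W :=
  match vs with
  | [::] => f
  | v :: vs' => fun x => derive (iterD vs' f) x v
  end.

Definition smooth_on {n : nat} {W : normedModType R} (U : set 'rV[R]_n)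
  (f : 'rV[R]_n -> W) : Prop :=
  forall (vs : seq 'rV[R]_n) (x : 'rV[R]_n), U x -> differentiable (iterD vs f) x.

Definition smooth_map {m n : nat} (W : set 'rV[R]_m) (U : set 'rV[R]_n)
  (F : {y | W y} -> {x | U x}) : Prop :=
  exists G : 'rV[R]_m -> 'rV[R]_n, smooth_on W G /\ forall y, G (sval y) = sval (F y).

Definition plots (X : Type) :=
  forall (n : nat) (U : set 'rV[R]_n), ({x | U x} -> X) -> Prop.

Definition restr {X : Type} {n : nat} {W U : set 'rV[R]_n} (sWU : W `<=` U)
  (P : {x | U x} -> X) : {x | W x} -> X :=
  fun w => P (exist U (sval w) (sWU (sval w) (proj2_sig w))).

Definition is_diffeology {X : Type} (D : plots X) : Prop :=
  (forall n U P, D n U P -> open U) /\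
  (forall n (U : set 'rV[R]_n) (c : X), open U -> D n U (fun _ => c)) /\
  (forall n (U : set 'rV[R]_n) P, D n U P ->
     forall m (W : set 'rV[R]_m) (F : {y | W y} -> {x | U x}),
       open W -> smooth_map F -> D m W (fun y => P (F y))) /\
  (forall n (U : set 'rV[R]_n) (P : {x | U x} -> X), open U ->
     (forall x, U x -> exists (W : set 'rV[R]_n) (sWU : W `<=` U),
        [/\ open W, W x & D n W (restr sWU P)]) ->
     D n U P).

Definition plots_le {X : Type} (D1 D2 : plots X) : Prop :=
  forall n U P, D1 n U P -> D2 n U P.

Definition smooth {X Y : Type} (DX : plots X) (DY : plots Y) (f : X -> Y) : Prop :=
  forall n U P, DX n U P -> DY n U (fun u => f (P u)).

Definition realD : plots R := fun n U P =>
  open U /\ exists G : 'rV[R]_n -> R^o, smooth_on U G /\ forall y, G (sval y) = P y.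

Definition prodD {X Y : Type} (DX : plots X) (DY : plots Y) : plots (X * Y) :=
  fun n U P => [/\ open U, DX n U (fun u => (P u).1) & DY n U (fun u => (P u).2)].

Definition subD {Z : Type} (DZ : plots Z) (A : Z -> Prop) : plots {z | A z} :=
  fun n U P => DZ n U (fun u => sval (P u)).
Arguments subD {Z} DZ A [n U] _.

(** Fibrewise vector space structure on p : V -> X: each fibre p^-1(x) is put
    in bijection (inj x / prj x) with a real vector space F x. *)
Definition fibre_vs {V X : Type} (p : V -> X) (F : X -> lmodType R)
  (inj : forall x, F x -> V) (prj : forall x, V -> F x) : Prop :=
  [/\ forall x (a : F x), p (inj x a) = x,
      forall x (a : F x), prj x (inj x a) = a
    & forall x v, p v = x -> inj x (prj x v) = v].

Definition fibprod {V X : Type} (p : V -> X) := {vw : V * V | p vw.1 = p vw.2}.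

Definition fib_add {V X : Type} (p : V -> X) (F : X -> lmodType R)
  (inj : forall x, F x -> V) (prj : forall x, V -> F x) (vw : fibprod p) : V :=
  let x := p (sval vw).1 in inj x (prj x (sval vw).1 + prj x (sval vw).2).

Definition fib_scale {V X : Type} (p : V -> X) (F : X -> lmodType R)
  (inj : forall x, F x -> V) (prj : forall x, V -> F x) (av : R * V) : V :=
  let x := p av.2 in inj x (av.1 *: prj x av.2).

Definition zero_section {V X : Type} (F : X -> lmodType R)
  (inj : forall x, F x -> V) (x : X) : V := inj x 0.

Definition is_dvs {V X : Type} (DX : plots X) (D : plots V) (p : V -> X)
  (F : X -> lmodType R) (inj : forall x, F x -> V) (prj : forall x, V -> F x) : Prop :=
  [/\ is_diffeology D,
      smooth D DX p,
      smooth (subD (prodD D D) (fun vw : V * V => p vw.1 = p vw.2)) D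
             (@fib_add _ _ p F inj prj),
      smooth (prodD realD D) D (fib_scale p inj prj)
    & smooth DX D (zero_section inj)].

End Diffeology.

(* Main.v *)
Require Import Defs.
From mathcomp Require Import all_boot all_order all_algebra.
From mathcomp Require Import all_classical all_reals all_analysis.
Import numFieldNormedType.Exports.

Theorem proposition4p6 (R : realType) (V X : Type)
  (DV : plots R V) (DX : plots R X) (p : V -> X)
  (F : X -> lmodType R) (inj : forall x, F x -> V) (prj : forall x, V -> F x) :
  is_diffeology DV -> is_diffeology DX -> smooth DV DX p ->
  fibre_vs p inj prj ->
  exists D : plots R V,
    [/\ plots_le DV D, is_dvs DX D p inj prj &
        forall D' : plots R V, plots_le DV D' -> is_dvs DX D' p inj prj ->
          plots_le D D'].
Proof.
move=> hV hX hp [Hp Hpi Hip].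
have [Xo [Xc [Xs Xsh]]] := hX.
pose D0 : plots R V := fun n U P => open U /\ DX n U (fun u => p (P u)).
have D0V : plots_le DV D0.
  move=> n U P HP; split; last exact: hp.
  by case: hV => Vo _; exact: Vo HP.
have D0d : is_dvs DX D0 p inj prj.
  split.
  - split; first by move=> n U P [].
    split; first by move=> n U c oU; split => //; exact: Xc.
    split; first by move=> n U P [oU HP] m W G oW sG; split => //; exact: (Xs n U _ HP m W G oW sG).
    move=> n U P oU H; split => //; apply: (Xsh n U _ oU) => x Ux.
    have [W [sWU [oW Wx [_ HW]]]] := H x Ux.
    by exists W, sWU.
  - by move=> n U P [].
  - move=> n U P [oU [_ H1] _]; split => //.
    have -> : (fun u => p (fib_add inj prj (P u))) = (fun u => p (sval (P u)).1).
      by apply: funext => u; rewrite /fib_add Hp.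
    exact: H1.
  - move=> n U P [oU _ [_ H2]]; split => //.
    have -> : (fun u => p (fib_scale p inj prj (P u))) = (fun u => p (P u).2).
      by apply: funext => u; rewrite /fib_scale Hp.
    exact: H2.
  - move=> n U P HP; split; first exact: Xo HP.
    have -> : (fun u => p (zero_section inj (P u))) = P.
      by apply: funext => u; rewrite /zero_section Hp.
    exact: HP.
pose D : plots R V := fun n U P =>
  forall D' : plots R V, plots_le DV D' -> is_dvs DX D' p inj prj -> D' n U P.
exists D; split.
- by move=> n U P HP D' le _; exact: le.
- split.
  + split; first by move=> n U P HP; case: (HP D0 D0V D0d).
    split; first by move=> n U c oU D' _ [[_ [C _]] _ _ _ _]; exact: C.
    split.
      move=> n U P HP m W G oW sG D' le d; case: (d) => [[_ [_ [S _]]] _ _ _ _].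
      exact: S (HP D' le d) m W G oW sG.
    move=> n U P oU H D' le d; case: (d) => [[_ [_ [_ Sh]]] _ _ _ _].
    apply: Sh => // x Ux; have [W [sWU [oW Wx HW]]] := H x Ux.
    by exists W, sWU; split => //; exact: HW.
  + by move=> n U P HP; case: (HP D0 D0V D0d).
  + move=> n U P [oU H1 H2] D' le d; case: (d) => [_ _ A _ _].
    by apply: A; split => //; [exact: H1 | exact: H2].
  + move=> n U P [oU H1 H2] D' le d; case: (d) => [_ _ _ S _].
    by apply: S; split => //; exact: H2.
  + move=> n U P HP D' le d; case: (d) => [_ _ _ _ Z].
    exact: Z.
- by move=> D' le d n U P HP; exact: HP.
Qed.
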